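(* Let $V\subseteq R_d$ be a Gotzmann monomial vector space with $x_i$-decomposition $V=V_0\oplus x_iV_1$ and $x_i$-compression $L=L_0\oplus x_iL_1$. If $\mathbf n_1L_1\subseteq L_0$, then for every monomial $m\in V$ divisible by $x_i$ and every variable $x_j$ not dividing $m$, the monomial $\frac{x_j}{x_i}m$ lies in $V$.
   Context: Let $\Bbbk$ be a field, $R=\Bbbk[x_1,\dots,x_n]/(x_1^2,\dots,x_n^2)$, $R_d$ its degree-$d$ component. A monomial vector space is a subspace of some $R_d$ spanned by monomials; $\mathbf m_1V$ is the span of $\{x_jm\}$ over monomials $m\in V$ and all $j$. A subspace $V\subseteq R_d$ is Gotzmann if $|\mathbf m_1V|\le|\mathbf m_1W|$ for every subspace $W\subseteq R_d$ with $|W|=|V|$ ($|\cdot|$ = dimension). Fix $x_i$, let $Q=R/(x_i)$, with $\mathbf n_1W$ the span of $\{x_jm: j\neq i, m\in W\text{ monomial}\}$. A lex segment of $Q_e$ is a space spanned by an initial segment of the squarefree degree-$e$ monomials of $Q$ in lexicographic order (variables ordered $x_1>\dots>x_n$, omitting $x_i$). The $x_i$-decomposition of $V$ is $V=V_0\oplus x_iV_1$, with $V_0\subseteq Q_d$ spanned by the monomials of $V$ not divisible by $x_i$ and $V_1\subseteq Q_{d-1}$ spanned by the monomials $m$ with $x_im\in V$. The $x_i$-compression of $V$ is $L=L_0\oplus x_iL_1$, where $L_0\subseteq Q_d$, $L_1\subseteq Q_{d-1}$ are the lex segments with $|L_0|=|V_0|$, $|L_1|=|V_1|$. *)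

(* Defs.v *)
From HB Require Import structures.
From mathcomp Require Import all_boot all_order all_algebra.
Set Implicit Arguments. Unset Strict Implicit. Unset Printing Implicit Defensive.
Import GRing.Theory.
Local Open Scope ring_scope.

(* R = k[x_1..x_n]/(x_1^2,..,x_n^2) as a k-vector space: a vector is a
   function from squarefree monomials (= subsets of 'I_n) to k.
   Variable x_{j+1} of the paper is index j : 'I_n. *)
Section Exterior.
Variables (K : fieldType) (n : nat).

Definition Rvec := {ffun {set 'I_n} -> K^o}.

Definition mono (M : {set 'I_n}) : Rvec := [ffun N : {set 'I_n} => (N == M)%:R].

Definition mspan (A : {set {set 'I_n}}) : {vspace Rvec} :=
  <<[seq mono M | M <- enum A]>>%VS.

Definition Rdeg (d : nat) : {vspace Rvec} := mspan [set M : {set 'I_n} | #|M| == d].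

(* multiplication by x_j : x_j * m_T = m_{N u {j}} if j \notin N, else 0 *)
Definition xmul_fun (j : 'I_n) (f : Rvec) : Rvec :=
  [ffun M : {set 'I_n} => if j \in M then f (M :\ j) else 0].

Lemma xmul_fun_linear j : linear (xmul_fun j).
Proof.
move=> a f g; apply/ffunP => M; rewrite /xmul_fun !ffunE.
case: (j \in M); rewrite ?ffunE //. by rewrite scaler0 addr0.
Qed.

Definition xmul (j : 'I_n) : 'End(Rvec) := linfun (xmul_fun j).

Definition m1 (W : {vspace Rvec}) : {vspace Rvec} :=
  (\sum_(j : 'I_n) (xmul j @: W))%VS.

Definition n1 (i : 'I_n) (W : {vspace Rvec}) : {vspace Rvec} :=
  (\sum_(j : 'I_n | j != i) (xmul j @: W))%VS.

Definition gotzmann (d : nat) (V : {vspace Rvec}) : Prop :=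
  (V <= Rdeg d)%VS /\
  forall W : {vspace Rvec}, (W <= Rdeg d)%VS -> \dim W = \dim V ->
    (\dim (m1 V) <= \dim (m1 W))%N.

Definition monomial_space (d : nat) (V : {vspace Rvec}) : Prop :=
  exists2 A : {set {set 'I_n}}, (forall M : {set 'I_n}, M \in A -> #|M| = d) & V = mspan A.

(* lexicographic order on squarefree monomials (x_1 > ... > x_n):
   M >lex N iff the smallest index where they differ belongs to M *)
Definition lexgt (M N : {set 'I_n}) : bool :=
  [exists x : 'I_n, [&& x \in M, x \notin N &
     [forall y : 'I_n, (y < x)%N ==> ((y \in M) == (y \in N))]]].

(* squarefree degree-e monomials of Q = R/(x_i) *)
Definition Qmonos (i : 'I_n) (e : nat) : {set {set 'I_n}} :=
  [set M : {set 'I_n} | (i \notin M) && (#|M| == e)].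

Definition lexseg (i : 'I_n) (e k : nat) : {set {set 'I_n}} :=
  [set M in Qmonos i e | #|[set N in Qmonos i e | lexgt N M]| < k]%N.

Definition V0monos (i : 'I_n) (V : {vspace Rvec}) : {set {set 'I_n}} :=
  [set M : {set 'I_n} | (i \notin M) && (mono M \in V)].
Definition V1monos (i : 'I_n) (V : {vspace Rvec}) : {set {set 'I_n}} :=
  [set M : {set 'I_n} | (i \notin M) && (mono (i |: M) \in V)].

Definition L0 (i : 'I_n) (d : nat) (V : {vspace Rvec}) : {vspace Rvec} :=
  mspan (lexseg i d #|V0monos i V|).
Definition L1 (i : 'I_n) (d : nat) (V : {vspace Rvec}) : {vspace Rvec} :=
  mspan (lexseg i d.-1 #|V1monos i V|).

End Exterior.

(* Main.v *)
Require Import Defs.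
From HB Require Import structures.
From mathcomp Require Import all_boot all_order all_algebra.
Set Implicit Arguments. Unset Strict Implicit. Unset Printing Implicit Defensive.

Section Comb.
Variable n : nat.
Implicit Types (A F : {set {set 'I_n}}) (B C X Y Z U V : {set 'I_n}).

Definition movable U V B :=
  [forall x, ((x \in U) ==> (x \notin B)) && ((x \in V) ==> (x \in B))].
Definition comp U V B := if movable U V B then (B :\: V) :|: U else B.
Definition compF U V F :=
  [set B in F | comp U V B \in F] :|: (comp U V @: [set B in F | comp U V B \notin F]).

Lemma movableP U V B :
  reflect ((forall x, x \in U -> x \notin B) /\ (forall x, x \in V -> x \in B))
          (movable U V B).
Proof.
apply: (iffP forallP) => [H|[H1 H2] x].
  by split=> x; have /andP[/implyP h1 /implyP h2] := H x; [apply: h1|apply: h2].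
by apply/andP; split; apply/implyP; [apply: H1|apply: H2].
Qed.

Lemma comp_idem U V B : comp U V (comp U V B) = comp U V B.
Proof.
rewrite /comp; case: (boolP (movable U V B)) => [mB|hn]; last by rewrite (negbTE hn).
case: movableP => // [[k1 k2]].
have U0 : forall x, x \in U = false.
  by move=> x; apply/negP => xU; have := k1 x xU; rewrite !inE xU orbT.
apply/setP => x; rewrite !inE U0 !orbF.
case xV: (x \in V) => //=.
Qed.

Lemma comp_moved U V B : comp U V B != B -> movable U V B.
Proof. by rewrite /comp; case: movable => //; rewrite eqxx. Qed.

Lemma comp_inv U V B : movable U V B -> (comp U V B :\: U) :|: V = B.
Proof.
move=> /[dup] mB /movableP[h1 h2]; rewrite /comp mB.
apply/setP => x; rewrite !inE.
case xV: (x \in V); first by rewrite orbT (h2 x xV).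
case xU: (x \in U); last by rewrite /= ?orbF ?andbT.
by rewrite (negbTE (h1 x xU)).
Qed.

Lemma comp_inj_in U V : {in [pred B | comp U V B != B] &, injective (comp U V)}.
Proof.
move=> B1 B2; rewrite !inE => /comp_moved m1 /comp_moved m2 e.
by rewrite -(comp_inv m1) -(comp_inv m2) e.
Qed.

Lemma mem_compF U V F X :
  (X \in compF U V F) = ((X \in F) && (comp U V X \in F)) ||
     [exists B in F, (comp U V B \notin F) && (X == comp U V B)].
Proof.
rewrite /compF !inE; congr (_ || _).
apply/imsetP/existsP => [[B] |[B /andP[BF /andP[cB /eqP ->]]]].
  by rewrite inE => /andP[BF cB] ->; exists B; rewrite BF cB eqxx.
by exists B; rewrite // inE BF.
Qed.

Lemma compF_comp U V F X : X \in compF U V F -> comp U V X \in compF U V F.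
Proof.
rewrite !mem_compF => /orP[/andP[XF cXF]|/existsP[B /and3P[BF cB /eqP ->]]].
  by rewrite cXF comp_idem cXF.
by apply/orP; right; apply/existsP; exists B; rewrite BF cB comp_idem eqxx.
Qed.

Lemma card_compF U V F : #|compF U V F| = #|F|.
Proof.
rewrite /compF cardsU.
have -> : [set B in F | comp U V B \in F] :&: (comp U V @: [set B in F | comp U V B \notin F]) = set0.
  apply/setP => X; rewrite !inE; apply/negP => /andP[/andP[XF _] /imsetP[B]].
  by rewrite inE => /andP[_ /negP nB] e; apply: nB; rewrite -e.
rewrite cards0 subn0 card_in_imset; last first.
  move=> B1 B2 h1 h2; apply: comp_inj_in; rewrite inE;
  [move: h1|move: h2]; rewrite inE => /andP[BF cB]; apply/eqP=> e; by rewrite e BF in cB.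
rewrite -cardsUI.
have -> : [set B in F | comp U V B \in F] :&: [set B in F | comp U V B \notin F] = set0.
  by apply/setP => X; rewrite !inE; case: (comp U V X \in F); rewrite !andbF.
rewrite cards0 addn0; apply: eq_card => X; rewrite !inE.
by case: (X \in F); case: (comp U V X \in F).
Qed.

End Comb.


Section Comb2.
Variable n : nat.
Implicit Types (A F : {set {set 'I_n}}) (B C X Y Z U V : {set 'I_n}).

Definition sh (i : 'I_n) F := [set X : {set 'I_n} | [exists j, [&& j != i, j \in X & X :\ j \in F]]].

Lemma mem_sh i F X : reflect (exists2 j, (j != i) && (j \in X) & X :\ j \in F) (X \in sh i F).
Proof.
rewrite inE; apply: (iffP existsP) => [[j /and3P[a b c]]|[j /andP[a b] c]]; exists j => //.
  by rewrite a b. by rewrite a b c.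
Qed.

Lemma not_movable U V B : (forall u, u \in U -> u \notin B) -> ~~ movable U V B ->
  exists2 v, v \in V & v \notin B.
Proof.
move=> h1 nm; case: (boolP [forall v in V, v \in B]) => [/forall_inP h2|].
  by case/negP: nm; apply/movableP; split.
by rewrite negb_forall_in => /exists_inP[v vV vB]; exists v.
Qed.

Lemma compE U V B : movable U V B -> comp U V B = (B :\: V) :|: U.
Proof. by rewrite /comp => ->. Qed.
Lemma compN U V B : ~~ movable U V B -> comp U V B = B.
Proof. by rewrite /comp => /negbTE ->. Qed.

Lemma sh_compF i U V A :
  i \notin U -> #|U| = #|V| ->
  (forall y, y \in V -> exists2 x, x \in U & compF (U :\ x) (V :\ y) A = A) ->
  sh i (compF U V A) \subset compF U V (sh i A).
Proof.
move=> iU cUV hyp; apply/subsetP => Z /mem_sh[z /andP[zi zZ] XF].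
set X := Z :\ z in XF.
have XE : forall y, (y \in X) = (y != z) && (y \in Z) by move=> y; rewrite !inE.
move: XF; rewrite mem_compF => /orP[/andP[XA cXA]|/existsP[B /and3P[BA cBA /eqP XB]]].
-
  rewrite mem_compF; apply/orP; left; apply/andP; split.
    by apply/mem_sh; exists z; rewrite ?zi ?zZ.
  case: (boolP (movable U V Z)) => [mZ|nmZ]; last by rewrite compN //; apply/mem_sh; exists z; rewrite ?zi ?zZ.
  have /movableP[h1 h2] := mZ.
  have hX1 : forall u, u \in U -> u \notin X by move=> u uU; rewrite XE (negbTE (h1 u uU)) andbF.
  case: (boolP (movable U V X)) => [mX|nmX].
    have /movableP[_ k2] := mX.
    have zV : z \notin V by apply/negP => /k2; rewrite XE eqxx.
    apply/mem_sh; exists z.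
      by rewrite zi compE // !inE zZ zV.
    move: cXA; rewrite compE // => cXA; rewrite compE //.
    suff -> : (Z :\: V :|: U) :\ z = X :\: V :|: U by [].
    apply/setP => y; rewrite !inE.
    case: (eqVneq y z) => [->|yz] /=; last by [].
    rewrite ?eqxx ?zV ?zZ /=; apply/esym/negP => zU; have := h1 z zU; by rewrite zZ.
  have [v vV vX] := not_movable hX1 nmX.
  have vz : v = z by move: vX; rewrite XE (h2 v vV) andbT negbK => /eqP.
  subst v.
  have [x xU Aeq] := hyp z vV.
  have mX' : movable (U :\ x) (V :\ z) X.
    apply/movableP; split=> y; rewrite !inE.
      by move=> /andP[_ yU]; rewrite (negbTE (h1 y yU)) andbF.
    by move=> /andP[yz yV]; rewrite yz (h2 y yV).
  have : comp (U :\ x) (V :\ z) X \in A.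
    by rewrite -Aeq; apply: compF_comp; rewrite Aeq.
  rewrite compE // => cXA'.
  apply/mem_sh; exists x.
    rewrite compE // !inE xU orbT andbT; apply/negP => /eqP xi; by rewrite -xi xU in iU.
  suff -> : (comp U V Z) :\ x = X :\: (V :\ z) :|: (U :\ x) by [].
  rewrite compE //; apply/setP => y; rewrite !inE.
  case: (eqVneq y x) => [->|yx] /=.
    by rewrite (negbTE (h1 x xU)) !andbF.
  case: (eqVneq y z) => [->|yz] /=; first by rewrite vV.
  by [].
-
  have BcB : comp U V B != B by apply/negP => /eqP e; rewrite e BA in cBA.
  have mB := comp_moved BcB.
  have /movableP[hb1 hb2] := mB.
  have XE2 : X = (B :\: V) :|: U by rewrite XB compE.
  have : exists u0, u0 \in U.
    case: (set_0Vmem U) => [U0|[u0 u0U]]; last by exists u0.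
    have V0 : V = set0 by apply/eqP; rewrite -cards_eq0 -cUV U0 cards0.
    by case/negP: BcB; rewrite compE // U0 V0 setD0 setU0.
  move=> [u0 u0U].
  have zX : z \notin X by rewrite XE eqxx.
  have UZ : forall u, u \in U -> u \in Z.
    move=> u uU; have : u \in X by rewrite XE2 !inE uU orbT.
    by rewrite XE => /andP[].
  have cZ : comp U V Z = Z.
    apply: compN; apply/negP => /movableP[k1 _].
    by have := k1 u0 u0U; rewrite (UZ u0 u0U).
  rewrite mem_compF.
  case: (boolP (z \in V)) => [zV|zV].
    have [x xU Aeq] := hyp z zV.
    have mB' : movable (U :\ x) (V :\ z) B.
      apply/movableP; split=> y; rewrite !inE.
        by move=> /andP[_ yU]; apply: hb1.
      by move=> /andP[_ yV]; apply: hb2.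
    have : comp (U :\ x) (V :\ z) B \in A.
      by rewrite -Aeq; apply: compF_comp; rewrite Aeq.
    rewrite compE // => cBA'.
    have ZA : Z \in sh i A.
      apply/mem_sh; exists x.
        rewrite UZ // andbT; apply/negP => /eqP xi; by rewrite -xi xU in iU.
      suff -> : Z :\ x = B :\: (V :\ z) :|: (U :\ x) by [].
      apply/setP => y; rewrite !inE.
      have := XE y; rewrite XE2 !inE => XEy.
      case: (eqVneq y x) => [->|yx] /=.
        by rewrite (negbTE (hb1 x xU)) andbF.
      case: (eqVneq y z) => [->|yz] /=.
        by rewrite zZ (hb2 z zV).
      by rewrite XEy yz.
    by rewrite cZ ZA.
  have zB : z \notin B.
    by apply/negP => zB; move: zX; rewrite XE2 !inE zB zV.
  have mBz : movable U V (z |: B).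
    apply/movableP; split=> y; rewrite !inE.
      move=> yU; rewrite (negbTE (hb1 y yU)) orbF; apply/negP => /eqP yz.
      by move: zX; rewrite -yz XE2 !inE yU orbT.
    by move=> yV; rewrite hb2 ?orbT.
  have cBz : comp U V (z |: B) = Z.
    rewrite compE //; apply/setP => y; rewrite !inE.
    have := XE y; rewrite XE2 !inE => XEy.
    case: (eqVneq y z) => [->|yz] /=; first by rewrite zV zZ.
    by rewrite XEy yz.
  have BzA : z |: B \in sh i A.
    apply/mem_sh; exists z; first by rewrite zi setU11.
    suff -> : (z |: B) :\ z = B by [].
    by rewrite setU1K.
  case: (boolP (Z \in sh i A)) => [ZA|ZA]; first by rewrite cZ ZA.
  apply/orP; right; apply/existsP; exists (z |: B); rewrite BzA cBz ZA eqxx.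
  by [].
Qed.

End Comb2.


Section Lex.
Variable n : nat.
Implicit Types (A F : {set {set 'I_n}}) (B C M N P X Y Z U V : {set 'I_n}).

Lemma lexgtP M N : reflect (exists x, [/\ x \in M, x \notin N &
     forall y : 'I_n, (y < x)%N -> (y \in M) = (y \in N)]) (lexgt M N).
Proof.
apply: (iffP existsP) => [[x /and3P[a b /forallP c]]|[x [a b c]]]; exists x.
  by split=> // y yx; apply/eqP; have := c y; rewrite yx.
by rewrite a b /=; apply/forallP => y; apply/implyP => yx; rewrite c.
Qed.

Lemma lexgt_irr M : ~~ lexgt M M.
Proof. by apply/negP => /lexgtP[x [a b _]]; rewrite a in b. Qed.

Lemma lexgt_trans M N P : lexgt M N -> lexgt N P -> lexgt M P.
Proof.
move=> /lexgtP[x [xM xN hx]] /lexgtP[y [yN yP hy]]; apply/lexgtP.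
case: (ltngtP x y) => [xy|yx|e].
- exists x; split => //; first by rewrite -(hy x xy).
  by move=> z zx; rewrite hx // hy // (ltn_trans zx xy).
- exists y; split => //; first by rewrite hx.
  by move=> z zy; rewrite hx ?(ltn_trans zy yx) // hy.
- by have := val_inj e => e'; rewrite e' yN in xN.
Qed.

Lemma lexgt_total M N : M != N -> lexgt M N || lexgt N M.
Proof.
move=> MN.
have [x0 Hx0] : exists x, (x \in M) != (x \in N).
  apply/existsP; move: MN; apply: contraR; rewrite negb_exists => /forallP h.
  by apply/eqP/setP => x; have := h x; rewrite negbK => /eqP.
case: (@arg_minnP _ x0 (fun x => (x \in M) != (x \in N)) (fun x : 'I_n => val x) Hx0) => x Hx Hmin.
have agree : forall y : 'I_n, (y < x)%N -> (y \in M) = (y \in N).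
  move=> y yx; apply/eqP; apply: contraTT yx => hy; rewrite -leqNgt; exact: Hmin.
case xM: (x \in M); move: Hx; rewrite xM => Hx.
  by apply/orP; left; apply/lexgtP; exists x; split => //; rewrite eq_sym eqb_id in Hx.
apply/orP; right; apply/lexgtP; exists x; split => //; last by move=> y /agree ->.
  by move: Hx; rewrite eq_sym; case: (x \in N).
by rewrite xM.
Qed.

End Lex.


Section KK.
Variable n : nat.
Variable i : 'I_n.
Variable e : nat.
Implicit Types (A F : {set {set 'I_n}}) (B C M N P X Y Z U V : {set 'I_n}).

Definition useful U V := [&& i \notin U, i \notin V, #|U| == #|V| &
   [exists u in U, [forall y in U :|: V, (val u <= val y)%N]]].
Definition rk X := #|[set N in Qmonos i e | lexgt N X]|.
Definition pot F := \sum_(X in F) rk X.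

Lemma inQ B : (B \in Qmonos i e) = (i \notin B) && (#|B| == e).
Proof. by rewrite /Qmonos inE. Qed.

Lemma comp_Q U V B : i \notin U -> #|U| = #|V| -> B \in Qmonos i e -> comp U V B \in Qmonos i e.
Proof.
move=> iU cUV; rewrite /comp; case: (boolP (movable U V B)) => // /movableP[h1 h2].
rewrite !inQ => /andP[iB /eqP cB].
rewrite !inE negb_or negb_and iB iU orbT /= cardsU.
have -> : (B :\: V) :&: U = set0.
  by apply/setP => x; rewrite !inE; case xU: (x \in U); rewrite ?andbF // (negbTE (h1 x xU)) !andbF.
rewrite cards0 subn0 cardsD.
have -> : B :&: V = V by apply/setIidPr/subsetP => x /h2.
rewrite -cUV subnK -?cB //; rewrite cUV; apply: subset_leq_card; by apply/subsetP => x /h2.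
Qed.

Lemma compF_Q U V F : i \notin U -> #|U| = #|V| -> F \subset Qmonos i e ->
  compF U V F \subset Qmonos i e.
Proof.
move=> iU cUV /subsetP FQ; apply/subsetP => X.
rewrite mem_compF => /orP[/andP[/FQ //]|/existsP[B /and3P[BF _ /eqP ->]]].
by apply: comp_Q => //; apply: FQ.
Qed.

Lemma comp_lexgt U V B : useful U V -> movable U V B -> lexgt (comp U V B) B.
Proof.
move=> /and4P[_ _ _ /exists_inP[u uU /forall_inP hu]] /[dup] mB /movableP[h1 h2].
rewrite compE //; apply/lexgtP; exists u; split.
- by rewrite !inE uU orbT.
- exact: h1.
- move=> y yu; rewrite !inE.
  have yU : y \in U = false.
    by apply/negP => yU; have := hu y; rewrite !inE yU leqNgt yu => /(_ isT).
  have yV : y \in V = false.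
    by apply/negP => yV; have := hu y; rewrite !inE yV orbT leqNgt yu => /(_ isT).
  by rewrite yU yV orbF.
Qed.

Lemma rk_lt B C : C \in Qmonos i e -> lexgt C B -> rk C < rk B.
Proof.
move=> CQ CB; apply: proper_card; apply/properP; split.
  apply/subsetP => N; rewrite !inE => /andP[NQ NC]; rewrite NQ /=.
  exact: lexgt_trans NC CB.
by exists C; [rewrite inE CQ CB | rewrite inE (negbTE (lexgt_irr C)) andbF].
Qed.

Lemma pot_lt U V F : useful U V -> F \subset Qmonos i e -> compF U V F != F ->
  pot (compF U V F) < pot F.
Proof.
move=> uUV FQ neq.
have /and4P[iU _ /eqP cUV _] := uUV.
set F1 := [set B in F | comp U V B \in F].
set F2 := [set B in F | comp U V B \notin F].
rewrite /pot (big_setID F1) [X in _ < X](big_setID F1) /=.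
have E1 : compF U V F :&: F1 = F1.
  apply/setIidPr/subsetP => X XF1; rewrite /compF inE; by rewrite XF1.
have E2 : compF U V F :\: F1 = comp U V @: F2.
  apply/setP => X; rewrite /compF !inE.
  case: (boolP (X \in comp U V @: F2)) => [/imsetP[B BF2 ->]|_]; last by rewrite orbF andNb.
  by move: BF2; rewrite inE => /andP[_ /negbTE ->].
have E3 : F :&: F1 = F1 by apply/setIidPr/subsetP => X; rewrite inE => /andP[].
have E4 : F :\: F1 = F2 by apply/setP => X; rewrite !inE; case: (X \in F); case: (comp U V X \in F).
rewrite E1 E2 E3 E4 ltn_add2l big_imset /=; last first.
  move=> B1 B2 h1 h2; apply: comp_inj_in; rewrite inE;
  [move: h1|move: h2]; rewrite inE => /andP[BF cB]; apply/eqP=> e'; by rewrite e' BF in cB.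
have [B BF2] : exists B, B \in F2.
  apply/set0Pn; apply: contra neq => /eqP F20.
  rewrite /compF -/F1 -/F2 F20 imset0 setU0; apply/eqP/setP => X; rewrite inE.
  case XF: (X \in F) => //=; apply/negPn/negP => nc.
  have : X \in F2 by rewrite inE XF nc.
  by rewrite F20 inE.
rewrite (bigD1 B) // [X in _ < X](bigD1 B) //=.
have hlt : forall X, X \in F2 -> rk (comp U V X) < rk X.
  move=> X XF2; have XF : X \in F by move: XF2; rewrite inE => /andP[].
  have mX : movable U V X.
    apply: comp_moved; apply/negP => /eqP e'; move: XF2; rewrite inE e' XF => /andP[_ /negP]; by [].
  apply: rk_lt; last exact: comp_lexgt.
  by apply: comp_Q => //; apply: (subsetP FQ).
apply: leq_ltn_trans (_ : _ <= rk (comp U V B) + \sum_(i0 in F2 | i0 != B) rk i0) _.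
  by rewrite leq_add2l; apply: leq_sum => X /andP[XF2 _]; apply: ltnW; apply: hlt.
by rewrite ltn_add2r; apply: hlt.
Qed.

End KK.


Section KK2.
Variable n : nat.
Variable i : 'I_n.
Variable e : nat.
Implicit Types (A F : {set {set 'I_n}}) (B C M N P X Y Z U V : {set 'I_n}).

Lemma compF_id U V F : (forall B, comp U V B = B) -> compF U V F = F.
Proof.
move=> h; apply/setP => X; rewrite mem_compF h andbb.
case XF: (X \in F) => //=; apply: negbTE; apply/negP => /exists_inP[B BF]; by rewrite h BF.
Qed.

Lemma init_seg F : F \subset Qmonos i e ->
  (forall U V, useful i U V -> compF U V F = F) ->
  forall B C, B \in F -> C \in Qmonos i e -> lexgt C B -> C \in F.
Proof.
move=> FQ hc B C BF CQ /[dup] CB /lexgtP[x [xC xB hx]].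
have BQ := subsetP FQ B BF.
move: (BQ) (CQ); rewrite !inQ => /andP[iB /eqP cB] /andP[iC /eqP cC].
have uUV : useful i (C :\: B) (B :\: C).
  apply/and4P; split.
  - by rewrite !inE negb_and iC orbT.
  - by rewrite !inE negb_and iB orbT.
  - by rewrite !cardsD cB cC setIC.
  apply/exists_inP; exists x; first by rewrite !inE xB xC.
  apply/forall_inP => y; rewrite !inE => hy; rewrite leqNgt; apply/negP => yx.
  by have := hx y yx; move: hy; case: (y \in C); case: (y \in B).
have mB : movable (C :\: B) (B :\: C) B.
  by apply/movableP; split => y; rewrite !inE => /andP[].
have cBC : comp (C :\: B) (B :\: C) B = C.
  rewrite compE //; apply/setP => y; rewrite !inE.
  by case: (y \in C); case: (y \in B).
rewrite -cBC -(hc _ _ uUV); apply: compF_comp; by rewrite (hc _ _ uUV).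
Qed.

Lemma lexseg_eq F : F \subset Qmonos i e ->
  (forall B C, B \in F -> C \in Qmonos i e -> lexgt C B -> C \in F) ->
  F = lexseg i e #|F|.
Proof.
move=> FQ up; apply/setP => M; rewrite /lexseg inE.
case MF: (M \in F).
  rewrite (subsetP FQ M MF) /=; apply/esym; apply: proper_card; apply/properP; split.
    by apply/subsetP => N; rewrite inE => /andP[NQ NM]; apply: up NQ NM.
  by exists M => //; rewrite inE (negbTE (lexgt_irr M)) andbF.
case MQ: (M \in Qmonos i e) => //=; apply/esym/negbTE; rewrite -leqNgt; apply: subset_leq_card.
apply/subsetP => N NF; rewrite inE (subsetP FQ N NF) /=.
have NM : N != M by apply/eqP => e'; rewrite e' MF in NF.
case/orP: (lexgt_total NM) => // MN.
by have := up _ _ NF MQ MN; rewrite MF.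
Qed.

Theorem KK A : A \subset Qmonos i e ->
  #|lexseg i e #|A| | = #|A| /\ #|sh i (lexseg i e #|A|)| <= #|sh i A|.
Proof.
move=> AQ.
pose P := [pred F : {set {set 'I_n}} | [&& F \subset Qmonos i e, #|F| == #|A| & #|sh i F| <= #|sh i A|]].
have PA : P A by rewrite /= AQ eqxx leqnn.
case: (@arg_minnP _ A P (pot i e) PA) => F /and3P[FQ /eqP cF shF] Fmin.
have allc : forall U V, useful i U V -> compF U V F = F.
  move=> U0 V0 u0; apply/eqP; apply/negPn/negP => ne0.
  pose Pp := [pred p : {set 'I_n} * {set 'I_n} | useful i p.1 p.2 && (compF p.1 p.2 F != F)].
  have Pp0 : Pp (U0, V0) by rewrite /= u0 ne0.
  case: (@arg_minnP _ (U0, V0) Pp (fun p => #|p.1|) Pp0) => [[U V]] /= /andP[uUV ne] pmin.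
  have /and4P[iU iV /eqP cUV /exists_inP[u uU /forall_inP hu]] := uUV.
  have hyp : forall y, y \in V -> exists2 x, x \in U & compF (U :\ x) (V :\ y) F = F.
    move=> y yV.
    have cU1 : #|U| = #|U :\ u|.+1 by rewrite (cardsD1 u U) uU.
    have cV1 : #|V| = #|V :\ y|.+1 by rewrite (cardsD1 y V) yV.
    case: (set_0Vmem (U :\ u)) => [U1|[x]].
      exists u => //; apply: compF_id => B.
      have V1 : V :\ y = set0.
        by apply/eqP; rewrite -cards_eq0; move: cV1; rewrite -cUV cU1 U1 cards0 => /eqP; rewrite eqSS eq_sym.
      by rewrite U1 V1 /comp setD0 setU0; case: movable.
    rewrite !inE => /andP[xu xU]; exists x => //.
    apply/eqP; apply/negPn/negP => ne1.
    have : Pp (U :\ x, V :\ y).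
      rewrite /= ne1 andbT; apply/and4P; split.
      - by rewrite !inE negb_and iU orbT.
      - by rewrite !inE negb_and iV orbT.
      - have cUx : #|U| = #|U :\ x|.+1 by rewrite (cardsD1 x U) xU.
        by apply/eqP/succn_inj; rewrite -cUx cUV cV1.
      apply/exists_inP; exists u; first by rewrite !inE eq_sym xu uU.
      apply/forall_inP => w; rewrite !inE => hw; apply: hu; rewrite !inE.
      by case/orP: hw => /andP[_ ->]; rewrite ?orbT.
    move=> /pmin /=; have cUx : #|U| = #|U :\ x|.+1 by rewrite (cardsD1 x U) xU.
    by rewrite cUx ltnn.
  have sub := sh_compF iU cUV hyp.
  have : P (compF U V F).
    rewrite /= compF_Q // ?card_compF ?cF ?eqxx //=.
    apply: leq_trans shF; apply: leq_trans (subset_leq_card sub) _.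
    by rewrite card_compF.
  move=> /Fmin; rewrite leqNgt; apply/negP/negPn; exact: pot_lt.
have up := init_seg FQ allc.
have FE := lexseg_eq FQ up.
by rewrite -cF -FE.
Qed.

End KK2.


Section Split.
Variable n : nat.
Variable i : 'I_n.
Implicit Types (A F X : {set {set 'I_n}}) (B C M N P S Y Z : {set 'I_n}) (j : 'I_n).

Definition Sh X := [set Y : {set 'I_n} | [exists j, [&& true, j \in Y & Y :\ j \in X]]].
Definition part0 X := [set M : {set 'I_n} | (i \notin M) && (M \in X)].
Definition part1 X := [set M : {set 'I_n} | (i \notin M) && (i |: M \in X)].

Lemma setU1_inj_in (D : {set {set 'I_n}}) : (forall Z, Z \in D -> i \notin Z) ->
  {in D &, injective (fun Z => i |: Z)}.
Proof.
move=> h Z1 Z2 Z1D Z2D e.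
by rewrite -(setU1K (h _ Z1D)) -(setU1K (h _ Z2D)) e.
Qed.

Lemma card_Sh X : #|Sh X| = #|sh i (part0 X)| + #|part0 X :|: sh i (part1 X)|.
Proof.
rewrite -(cardsID [set Y : {set 'I_n} | i \in Y] (Sh X)) addnC.
congr (_ + _).
  apply: eq_card => Y; rewrite !inE.
  apply/andP/existsP => [[iY /existsP[j /and3P[_ jY YX]]]|[j /and3P[ji jY]]].
    exists j; rewrite jY /=; apply/andP; split.
      by apply/eqP => e; rewrite -e jY in iY.
    by rewrite !inE YX negb_and iY orbT.
  rewrite !inE => /andP[nY YX]; split.
    by move: nY; rewrite negb_and negbK eq_sym (negbTE ji).
  by apply/existsP; exists j; rewrite jY YX.
have nI : forall Z, Z \in part0 X :|: sh i (part1 X) -> i \notin Z.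
  move=> Z; rewrite !inE => /orP[/andP[]//|/existsP[j /and3P[ji jZ]]].
  rewrite !inE => /andP[nZ _]; move: nZ; rewrite negb_and negbK eq_sym (negbTE ji).
  by [].
rewrite -(card_in_imset (setU1_inj_in nI)); apply: eq_card => Y.
rewrite !inE; apply/andP/imsetP.
  move=> [/existsP[j /and3P[_ jY YX]] iY]; exists (Y :\ i); last by rewrite setD1K.
  case: (eqVneq j i) => [ej|ji].
    by rewrite ej in YX; rewrite !inE eqxx YX.
  rewrite inE; apply/orP; right; apply/mem_sh; exists j; first by rewrite ji !inE (negbTE ji) jY.
  rewrite inE !inE eqxx /=.
  rewrite andbF /=.
  suff -> : i |: (Y :\ i :\ j) = Y :\ j by [].
  apply/setP => y; rewrite !inE; case: (eqVneq y i) => [->|yi]; last by [].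
  by rewrite eq_sym (negbTE ji) iY.
move=> [Z ZD ->]; split; last by rewrite setU11.
have iZ := nI Z ZD.
move: ZD; rewrite inE => /orP[].
  rewrite inE => /andP[_ ZX]; apply/existsP; exists i; by rewrite setU11 setU1K.
move=> /mem_sh[j /andP[ji jZ]]; rewrite inE => /andP[_ ZjX].
apply/existsP; exists j; rewrite !inE jZ orbT /=.
suff -> : (i |: Z) :\ j = i |: (Z :\ j) by [].
apply/setP => y; rewrite !inE; case: (eqVneq y i) => [->|yi] /=; last by [].
by rewrite eq_sym (negbTE ji).
Qed.

End Split.

Import GRing.Theory.
Local Open Scope ring_scope.

Section Lin.
Variable K : fieldType.
Variable n : nat.
Implicit Types (A F : {set {set 'I_n}}) (B C M N P S X Y Z U V : {set 'I_n}) (j : 'I_n).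

Lemma xmulE j (f : Rvec K n) : xmul K j f = xmul_fun j f.
Proof.
pose flM := GRing.isLinear.Build _ _ _ _ (xmul_fun (K:=K) j) (xmul_fun_linear j).
pose fL : {linear _ -> _} := HB.pack (xmul_fun (K:=K) j) flM.
by rewrite /xmul (lfunE fL).
Qed.

Lemma xmul_mono j S : xmul K j (mono K S) = if j \in S then 0 else mono K (j |: S).
Proof.
rewrite xmulE; apply/ffunP => M; rewrite /xmul_fun !ffunE.
case jS: (j \in S); case jM: (j \in M); rewrite ?ffunE //.
- case: eqP => // e; by move: jS; rewrite -e !inE eqxx.
- congr (_%:R); case: (M =P j |: S) => [->|ne]; first by rewrite setU1K ?jS ?eqxx.
  by case: eqP => // e; case: ne; rewrite -e setD1K.
- case: eqP => // e; by move: jM; rewrite e setU11.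
Qed.

Lemma ev_linear N : linear (fun f : Rvec K n => (f N : K^o)).
Proof. by move=> a f g; rewrite !ffunE. Qed.

Definition evN N : 'Hom(Rvec K n, K^o) := linfun (fun f : Rvec K n => (f N : K^o)).

Lemma evNE N f : evN N f = f N.
Proof.
pose flM := GRing.isLinear.Build _ _ _ _ (fun f : Rvec K n => (f N : K^o)) (ev_linear N).
pose fL : {linear _ -> _} := HB.pack (fun f : Rvec K n => (f N : K^o)) flM.
by rewrite /evN (lfunE fL).
Qed.

Lemma mono_mem_seq N (s : seq {set 'I_n}) :
  mono K N \in <<[seq mono K M | M <- s]>>%VS -> N \in s.
Proof.
move=> h; apply: contraTT isT => Ns.
have : (<<[seq mono K M | M <- s]>> <= lker (evN N))%VS.
  apply/span_subvP => v /mapP[M Ms ->]; rewrite memv_ker evNE ffunE.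
  case: (N =P M) => [e|_]; [by rewrite e Ms in Ns | by rewrite eqxx].
move=> /subvP /(_ _ h); rewrite memv_ker evNE ffunE eqxx.
by rewrite oner_eq0.
Qed.

Lemma free_mono (s : seq {set 'I_n}) : uniq s -> free [seq mono K M | M <- s].
Proof.
elim: s => [|M s IH] /=; first by rewrite nil_free.
move=> /andP[Ms us]; rewrite free_cons IH // andbT.
by apply/negP => /mono_mem_seq; rewrite (negbTE Ms).
Qed.

Lemma dim_mspan A : \dim (mspan K A) = #|A|.
Proof.
have := free_mono (enum_uniq (mem A)); rewrite /free => /eqP.
by rewrite size_map -cardE /mspan.
Qed.

Lemma mono_mspan N A : (mono K N \in mspan K A) = (N \in A).
Proof.
apply/idP/idP => [/mono_mem_seq|NA]; first by rewrite mem_enum.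
by apply: memv_span; apply/mapP; exists N; rewrite ?mem_enum.
Qed.

Lemma mspanS A F : A \subset F -> (mspan K A <= mspan K F)%VS.
Proof.
move=> /subsetP AB; apply/span_subvP => v /mapP[M MA ->].
by rewrite mono_mspan AB // -mem_enum.
Qed.

Lemma sum_xmul_mspan (P : pred 'I_n) A :
  (\sum_(j | P j) (xmul K j @: mspan K A))%VS =
  mspan K [set X : {set 'I_n} | [exists j, [&& P j, j \in X & X :\ j \in A]]].
Proof.
apply/eqP; rewrite eqEsubv; apply/andP; split.
  apply/subv_sumP => j Pj; rewrite /mspan limg_span; apply/span_subvP => v.
  rewrite -map_comp => /mapP[M MA ->] /=; rewrite xmul_mono.
  case: ifP => jM; first by rewrite mem0v.
  rewrite mono_mspan inE; apply/existsP; exists j; rewrite Pj setU11 setU1K ?jM //=.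
  by rewrite -mem_enum.
apply/span_subvP => v /mapP[X]; rewrite mem_enum inE => /existsP[j /and3P[Pj jX XA]] ->.
apply: (sumv_sup j Pj); apply/memv_imgP; exists (mono K (X :\ j)).
  by rewrite mono_mspan.
by rewrite xmul_mono !inE eqxx /= setD1K.
Qed.

End Lin.

Unset Implicit Arguments.

Theorem lemma4p7 (K : fieldType) (n d : nat) (V : {vspace Rvec K n}) (i : 'I_n) :
  monomial_space d V ->
  gotzmann d V ->
  (n1 i (L1 i d V) <= L0 i d V)%VS ->
  forall M : {set 'I_n}, mono K M \in V -> i \in M ->
  forall j : 'I_n, j \notin M -> mono K (j |: (M :\ i)) \in V.
Proof.
move=> [A Ad ->] [VR Vmin] hn1 M MV iM j jM.
rewrite mono_mspan in MV.
set A0 := part0 i A; set A1 := part1 i A.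
have E0 : V0monos i (mspan K A) = A0.
  by apply/setP => X; rewrite !inE mono_mspan.
have E1 : V1monos i (mspan K A) = A1.
  by apply/setP => X; rewrite !inE mono_mspan.
have d1 : (0 < d)%N by rewrite -(Ad M MV) card_gt0; apply/set0Pn; exists i.
set lex0 := lexseg i d #|A0|; set lex1 := lexseg i d.-1 #|A1|.
have lex0Q : lex0 \subset Qmonos i d by apply/subsetP => X; rewrite inE => /andP[].
have lex1Q : lex1 \subset Qmonos i d.-1 by apply/subsetP => X; rewrite inE => /andP[].
have A0Q : A0 \subset Qmonos i d.
  apply/subsetP => X; rewrite !inE => /andP[iX XA]; by rewrite iX Ad ?eqxx.
have A1Q : A1 \subset Qmonos i d.-1.
  apply/subsetP => X; rewrite !inE => /andP[iX XA]; rewrite iX /=.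
  by have := Ad _ XA; rewrite cardsU1 iX => <-.
have [c0 sh0] := KK A0Q.
have [c1 _] := KK A1Q.
have shlex : sh i lex1 \subset lex0.
  move: hn1; rewrite /L0 /L1 E0 E1 -/lex0 -/lex1.
  have -> : n1 i (mspan K lex1) = mspan K (sh i lex1) := sum_xmul_mspan K (fun j => j != i) lex1.
  move=> /subvP h; apply/subsetP => X XS.
  by rewrite -(@mono_mspan K) h // mono_mspan.
set Lset := lex0 :|: [set i |: N | N in lex1].
have nI1 : forall Z, Z \in lex1 -> i \notin Z.
  by move=> Z /(subsetP lex1Q); rewrite inQ => /andP[].
have nI0 : forall Z, Z \in lex0 -> i \notin Z.
  by move=> Z /(subsetP lex0Q); rewrite inQ => /andP[].
have cL : #|Lset| = (#|A0| + #|A1|)%N.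
  rewrite cardsU card_in_imset ?c0 ?c1; last exact: setU1_inj_in.
  suff -> : lex0 :&: [set i |: N | N in lex1] = set0 by rewrite cards0 subn0.
  apply/setP => X; rewrite in_setI in_set0; apply/negP => /andP[X0 /imsetP[N _ e]].
  by have := nI0 _ X0; rewrite e setU11.
have cA : #|A| = (#|A0| + #|A1|)%N.
  rewrite -(cardsID [set Y : {set 'I_n} | i \in Y] A) addnC; congr (_ + _)%N.
    by apply: eq_card => X; rewrite !inE andbC.
  have nA1 : forall Z, Z \in A1 -> i \notin Z by move=> Z; rewrite inE => /andP[].
  rewrite -(card_in_imset (setU1_inj_in nA1)); apply: eq_card => X; rewrite !inE.
  apply/andP/imsetP => [[iX XA]|[Z]]; first by exists (X :\ i); rewrite ?setD1K // !inE eqxx /= setD1K.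
  by rewrite inE => /andP[_ ZA] ->; rewrite setU11.
have WR : (mspan K Lset <= Rdeg K n d)%VS.
  apply: mspanS; apply/subsetP => X /setUP[/(subsetP lex0Q)|/imsetP[N NL ->]]; rewrite inE.
    by case/andP => _ cX; rewrite inE cX.
  have := subsetP lex1Q N NL; rewrite inQ => /andP[iN /eqP cN].
  by rewrite cardsU1 iN cN add1n prednK.
have dW : \dim (mspan K Lset) = \dim (mspan K A) by rewrite !dim_mspan cL cA.
have := Vmin _ WR dW.
have ShE : forall X, m1 (mspan K X) = mspan K (Sh X) := fun X => sum_xmul_mspan K (fun _ => true) X.
rewrite !ShE !dim_mspan !(card_Sh i).
have P0 : part0 i Lset = lex0.
  apply/setP => X; rewrite [X \in part0 _ _]inE in_setU; apply/andP/idP => [[iX /orP[//|/imsetP[N _ e]]]|X0].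
    by rewrite e setU11 in iX.
  by rewrite nI0 // X0.
have P1 : part1 i Lset = lex1.
  apply/setP => X; rewrite [X \in part1 _ _]inE in_setU; apply/andP/idP => [[iX /orP[X0|/imsetP[N NL e]]]|X1].
    by have := nI0 _ X0; rewrite setU11.
    by rewrite -(setU1K iX) e setU1K ?nI1.
  by rewrite nI1 // orbC; split => //; apply/orP; left; apply/imsetP; exists X.
rewrite P0 P1 (setUidPl shlex) -/A0 -/A1 c0 => hle.
have hle2 : (#|A0 :|: sh i A1| <= #|A0|)%N.
  by rewrite -(leq_add2l #|sh i lex0|); apply: leq_trans hle; rewrite leq_add2r.
have sub : sh i A1 \subset A0.
  have /eqP e : A0 == A0 :|: sh i A1 by rewrite eqEcard subsetUl hle2.
  by rewrite e subsetUr.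
have : j |: (M :\ i) \in A0.
  apply: (subsetP sub); apply/mem_sh; exists j.
    by rewrite setU11 andbT; apply/eqP => e; rewrite e iM in jM.
  have jMi : j \notin M :\ i by rewrite !inE negb_and jM orbT.
  rewrite setU1K // inE setD1K // MV andbT !inE eqxx.
  by [].
rewrite /A0 /part0 inE => /andP[_ h].
by rewrite mono_mspan.
Qed.
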